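(* If $f_N\in H_N^{\mathrm{sip}}$ converges weakly to $f\in H^{\mathrm{sbm}}$ with respect to the Hilbert space convergence $H_N^{\mathrm{sip}}\to H^{\mathrm{sbm}}$, then $\lim_{N\to\infty}f_N(0)=f(0)$.
   Context: $\gamma>0$; $\mu_N$ gives mass $\frac1N$ to each point of $\frac1N\mathbb Z$; $\nu_{\gamma,N}=\mu_N+\sqrt2\gamma\delta_0$; $H_N^{\mathrm{sip}}=L^2(\frac1N\mathbb Z,\nu_{\gamma,N})$; $H^{\mathrm{sbm}}=L^2(\mathbb R,dx+\sqrt2\gamma\delta_0)$ (so $f(0)$ is well defined for $f\in H^{\mathrm{sbm}}$). Hilbert convergence is witnessed by $C=\{f+\lambda\mathbf 1_{\{0\}}:f\in C_c^\infty(\mathbb R),\lambda\in\mathbb R\}$ and $\Phi_Nf=f|_{\frac1N\mathbb Z}$. Strong convergence $g_N\to g$: there exist $\tilde g_M\in C$ with $\|\tilde g_M-g\|_{H^{\mathrm{sbm}}}\to0$ and $\lim_M\limsup_N\|\Phi_N\tilde g_M-g_N\|_{H_N^{\mathrm{sip}}}=0$. Weak convergence $f_N\to f$: $\langle f_N,g_N\rangle_{H_N^{\mathrm{sip}}}\to\langle f,g\rangle_{H^{\mathrm{sbm}}}$ for every strongly convergent $g_N\to g$. *)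

(* Defs.v *)
From HB Require Import structures.
From mathcomp Require Import all_boot all_order all_algebra.
From mathcomp Require Import all_classical all_reals all_analysis.
Set Implicit Arguments. Unset Strict Implicit. Unset Printing Implicit Defensive.
Import Order.TTheory GRing.Theory Num.Theory.
Import numFieldNormedType.Exports.
Local Open Scope classical_set_scope.
Local Open Scope ring_scope.

Section Defs.
Variable R : realType.

(* ---------- the discrete spaces H_N^sip = L^2(1/N Z, nu_{gamma,N}) ----------
   An element of H_N^sip is represented by a function u : int -> R, where
   u k is the value at the lattice point k/N.  nu_{gamma,N} gives mass 1/N
   to each k/N and an extra mass sqrt 2 * gamma to the point 0 (k = 0). *)

(* u is square-summable w.r.t. nu_{gamma,N} (the atom does not matter). *)
Definition sip_mem (u : int -> R) : Prop :=
  (\esum_(k in [set: int]) ((u k) ^+ 2)%:E < +oo)%E.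

(* <u, v>_{H_N^sip} = int u v d nu_{gamma,N}, the integral being
   (1/N) (sum of positive part - sum of negative part) + sqrt2 gamma u(0) v(0) *)
Definition sip_dot (gamma : R) (N : nat) (u v : int -> R) : R :=
  N%:R^-1 * (fine (\esum_(k in [set: int]) (Num.max (u k * v k) 0)%:E)
             - fine (\esum_(k in [set: int]) (Num.max (- (u k * v k)) 0)%:E))
  + Num.sqrt 2 * gamma * (u 0 * v 0).

Definition sip_norm (gamma : R) (N : nat) (u : int -> R) : R :=
  Num.sqrt (sip_dot gamma N u u).

Definition sbm_mem (f : R -> R) : Prop :=
  measurable_fun [set: R] f /\
  (@lebesgue_measure R).-integrable [set: R] (fun x => ((f x) ^+ 2)%:E).

Definition sbm_dot (gamma : R) (f g : R -> R) : R :=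
  Rintegral (@lebesgue_measure R) [set: R] (fun x => f x * g x)
  + Num.sqrt 2 * gamma * (f 0 * g 0).

Definition sbm_norm (gamma : R) (f : R -> R) : R := Num.sqrt (sbm_dot gamma f f).

Definition smooth (f : R -> R) : Prop :=
  forall (n : nat) (x : R), derivable (derive1n n f) x 1.

Definition compact_support (f : R -> R) : Prop :=
  exists M : R, forall x : R, M < `|x| -> f x = 0.

Definition in_core (g : R -> R) : Prop :=
  exists (phi : R -> R) (lambda : R),
    smooth phi /\ compact_support phi /\
    g = (fun x => phi x + (if x == 0 then lambda else 0)).

Definition Phi (N : nat) (f : R -> R) : int -> R :=
  fun k => f (k%:~R / N%:R).

(* ---------- strong / weak convergence along N -> oo ----------
   Sequences are indexed by n : nat, the n-th term living in H_N^sip with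
   N = n.+1 (so that N ranges over the positive integers). *)
Definition strong_conv (gamma : R) (g : nat -> int -> R) (h : R -> R) : Prop :=
  (forall n, sip_mem (g n)) /\ sbm_mem h /\
  exists gt : nat -> R -> R,
    (forall M, in_core (gt M)) /\
    (sbm_norm gamma (fun x => gt M x - h x) @[M --> \oo] --> 0) /\
    ((fun M => limn_esup
        (fun n => (sip_norm gamma n.+1 (fun k => Phi n.+1 (gt M) k - g n k))%:E))
       @ \oo --> 0%E).

Definition weak_conv (gamma : R) (f : nat -> int -> R) (h : R -> R) : Prop :=
  (forall n, sip_mem (f n)) /\ sbm_mem h /\
  forall (g : nat -> int -> R) (k : R -> R), strong_conv gamma g k ->
    sip_dot gamma n.+1 (f n) (g n) @[n --> \oo] --> sbm_dot gamma h k.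

End Defs.

(* Main.v *)
Require Import Defs.
From HB Require Import structures.
From mathcomp Require Import all_boot all_order all_algebra.
From mathcomp Require Import all_classical all_reals all_analysis.
From mathcomp Require Import lra measurable_realfun.
Import Order.TTheory GRing.Theory Num.Theory.
Import numFieldNormedType.Exports.
Local Open Scope classical_set_scope.
Local Open Scope ring_scope.

Section H.
Variable R : realType.

Lemma esum_at0 (a : int -> \bar R) : (0 <= a 0%R)%E -> (forall i : int, i != 0 -> a i = 0%E) ->
  \esum_(i in [set: int]) a i = a 0.
Proof.
move=> a0 az.
rewrite (eq_esum (b := fun i => if i \in [set 0%Z] then a i else 0%E)); last first.
  move=> i _; case: (boolP (i \in [set 0%Z])) => // /negP; rewrite inE => /eqP.
  by move=> ?; rewrite az //; apply/eqP.
by rewrite -esum_mkcond esum_set1.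
Qed.

Lemma int_at0 (F : R -> \bar R) : (forall x, x != 0 -> F x = 0%E) ->
  (\int[@lebesgue_measure R]_(x in [set: R]) F x = 0)%E.
Proof.
move=> Fz.
have mD : measurable ([set: R] `\ 0) by apply: measurableD.
rewrite -(@integral_setD1 _ _ 0) //; last first.
  eapply eq_measurable_fun.
  + move=> x; rewrite inE => -[_ /eqP ?]; rewrite Fz //.
  + exact: measurable_cst.
  all: try exact: mD.
rewrite (eq_integral (fun _ => 0%E)) ?integral0 // => x; rewrite inE => -[_ /eqP ?].
by rewrite Fz.
Qed.

Lemma maxsub (x : R) : Num.max x 0 - Num.max (- x) 0 = x.
Proof.
rewrite /Order.max; case: ltP => h1; case: ltP => h2; lra.
Qed.

Lemma smooth0 : smooth (fun _ : R => 0).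
Proof.
move=> n x.
have -> : derive1n n (fun _ : R => 0 : R) = cst 0.
  elim: n => [//|n IH]; rewrite derive1nS IH; apply/funext => y; exact: derive1_cst.
exact: derivable_cst.
Qed.

Definition gd : int -> R := fun j => if j == 0 then 1 else 0.
Definition kd : R -> R := fun x => if x == 0 then 1 else 0.

Lemma sip_dot_gd gamma N (u : int -> R) :
  sip_dot gamma N u gd = (N%:R^-1 + Num.sqrt 2 * gamma) * u 0.
Proof.
rewrite /sip_dot.
rewrite (@esum_at0 (fun k => (Num.max (u k * gd k) 0)%:E)); last first.
  by move=> i /negbTE hi; rewrite /gd hi mulr0 maxxx.
  by rewrite lee_fin le_max lexx orbT.
rewrite (@esum_at0 (fun k => (Num.max (- (u k * gd k)) 0)%:E)); last first.
  by move=> i /negbTE hi; rewrite /gd hi mulr0 oppr0 maxxx.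
  by rewrite lee_fin le_max lexx orbT.
by rewrite /= maxsub /gd eqxx mulr1 mulrDl.
Qed.

Lemma sip_norm0 (gamma : R) N : sip_norm gamma N (fun _ => 0) = 0.
Proof.
rewrite /sip_norm /sip_dot !esum1 /=.
- by rewrite subrr mulr0 mulr0 mulr0 add0r sqrtr0.
- by move=> i _; rewrite mulr0 oppr0 maxxx.
- by move=> i _; rewrite mulr0 maxxx.
Qed.

Lemma sbm_dot_kd gamma (h : R -> R) : sbm_dot gamma h kd = Num.sqrt 2 * gamma * h 0.
Proof.
rewrite /sbm_dot /Rintegral int_at0 /=.
  by rewrite add0r /kd eqxx mulr1.
by move=> x /negbTE hx; rewrite /kd hx mulr0.
Qed.

Lemma sbm_norm0 gamma : sbm_norm gamma (fun x => kd x - kd x) = 0.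
Proof.
rewrite /sbm_norm /sbm_dot /Rintegral int_at0 /=.
  by rewrite !subrr !mulr0 addr0 sqrtr0.
by move=> x _; rewrite subrr mulr0.
Qed.

Lemma kd_sq : (fun x => kd x ^+ 2) = kd.
Proof. by apply/funext => x; rewrite /kd; case: ifP => _; rewrite ?expr1n ?expr0n. Qed.

Lemma kd_indic : kd = \1_[set (0:R)].
Proof.
apply/funext => x; rewrite /kd /indic; case: eqP => [->|h].
  by rewrite mem_set.
by rewrite memNset.
Qed.

Lemma sbm_mem_kd : sbm_mem kd.
Proof.
have mk : measurable_fun [set: R] kd by rewrite kd_indic; exact: measurable_indic.
split => //; apply/integrableP; split.
  apply/measurable_EFinP; apply: (eq_measurable_fun kd); last exact: mk.
  by move=> x _; rewrite -[in LHS]kd_sq.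
rewrite int_at0 ?ltry // => x /negbTE hx.
by rewrite /kd hx expr0n /= normr0.
Qed.

Lemma sip_mem_gd : sip_mem gd.
Proof.
rewrite /sip_mem (@esum_at0 (fun k => ((gd k) ^+ 2)%:E)) ?ltry //.
  by rewrite lee_fin sqr_ge0.
by move=> i /negbTE hi; rewrite /gd hi expr0n.
Qed.

Lemma in_core_kd : in_core kd.
Proof.
exists (fun _ => 0), 1; split; first exact: smooth0.
split; first by exists 0.
by apply/funext => x; rewrite add0r.
Qed.

Lemma Phi_kd N : (N > 0)%N -> Phi N kd = gd.
Proof.
move=> N0; apply/funext => k; rewrite /Phi /kd /gd mulf_eq0 invr_eq0 pnatr_eq0 intr_eq0.
by rewrite -(negbK (N == 0)%N) -lt0n N0 orbF.
Qed.

Lemma strong_gd gamma : strong_conv gamma (fun _ => gd) kd.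
Proof.
split; first by move=> _; exact: sip_mem_gd.
split; first exact: sbm_mem_kd.
exists (fun _ => kd); split; first by move=> _; exact: in_core_kd.
split.
  rewrite sbm_norm0; exact: cvg_cst.
have -> : (fun M : nat => limn_esup (fun n => (sip_norm gamma n.+1
    (fun k => Phi n.+1 kd k - gd k))%:E)) = fun _ => 0%E.
  apply/funext => M.
  have -> : (fun n => (sip_norm gamma n.+1 (fun k => Phi n.+1 kd k - gd k))%:E)
     = fun _ => 0%E.
    apply/funext => n; rewrite Phi_kd //.
    have -> : (fun k => gd k - gd k) = fun _ => 0 by apply/funext => k; rewrite subrr.
    by rewrite sip_norm0.
  by rewrite is_cvg_limn_esupE ?lim_cst //; apply: cvg_cst.
exact: cvg_cst.
Qed.
End H.
Theorem proposition5p9 (R : realType) (gamma : R) (hgamma : 0 < gamma)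
    (f : nat -> int -> R) (h : R -> R) :
  weak_conv gamma f h -> f n 0 @[n --> \oo] --> h 0.
Proof.
move=> [_ [_ W]].
have := W _ _ (@strong_gd R gamma); rewrite sbm_dot_kd /=.
set c := Num.sqrt 2 * gamma.
have c0 : 0 < c by rewrite /c mulr_gt0 // sqrtr_gt0.
have E : (fun n => sip_dot gamma n.+1 (f n) (gd R)) =
   (fun n => (n.+1%:R^-1 + c) * f n 0).
  by apply/funext => n; rewrite sip_dot_gd.
rewrite E => H.
have Hd : (fun n : nat => n.+1%:R^-1 + c) @ \oo --> c.
  rewrite -[X in _ --> X]add0r; apply: cvgD; last exact: cvg_cst.
  exact: (@cvg_harmonic R).
have Hv := cvgV (lt0r_neq0 c0) Hd.
have HM : (fun n : nat => ((n.+1%:R^-1 + c) * f n 0) * (n.+1%:R^-1 + c)^-1) @ \oo --> c * h 0 / c.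
  exact: (cvgM H (Hv _)).
have E2 : (fun n => f n 0) = (fun n : nat => ((n.+1%:R^-1 + c) * f n 0) * (n.+1%:R^-1 + c)^-1).
  apply/funext => n /=; rewrite mulrAC divff ?mul1r //.
  by apply: lt0r_neq0; apply: addr_gt0.
rewrite E2; suff -> : h 0 = c * h 0 / c by [].
by rewrite mulrAC divff ?mul1r // lt0r_neq0.
Qed.
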